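(* Let $n>1$ be square-free and let $r,t\in\mathbb{Z}$ with $\gcd(r,n)=1$. Then \[\mathsf{c}(V_n,a_{n,r,t})=\sum_{(d,\ell)}\frac{d}{\kappa(n,r,t)}\,\phi\!\left(\frac{|r|_n}{\ell\,\gcd\left(\kappa(d,r,t),|r|_n\right)}\right),\] where the sum runs over all pairs of positive integers $(d,\ell)$ such that $d\mid n$, $\ell$ divides $\dfrac{|r|_n}{\gcd\left(\kappa(d,r,t),|r|_n\right)}$, and $\gcd\left(r^{\ell\kappa(d,r,t)}-1,\,n\right)=d$.
   Context: $\mathrm{D}_{2n}=\langle u_n,v_n\mid u_n^n=1=v_n^2,\ v_nu_nv_n=u_n^{-1}\rangle$. For integers $r,t$ with $\gcd(r,n)=1$, $a_{n,r,t}$ is the automorphism of $\mathrm{D}_{2n}$ with $u_n^i\mapsto u_n^{ri}$, $u_n^jv_n\mapsto u_n^{rj+t}v_n$. $V_n:=\{u_n^iv_n: 0\leq i\leq n-1\}$, and $\mathsf{c}(V_n,a)$ is the number of cycles (including fixed points) of the permutation induced by $a$ on $V_n$. For $m\geq1$ with $\gcd(r,m)=1$, $|r|_m$ is the multiplicative order of $r$ mod $m$ (so $|r|_1=1$). $S_k(x):=1+x+\cdots+x^{k-1}$ ($S_0=0$), and $\kappa(m,r,t):=\dfrac{m\,|r|_m}{\gcd\left(m,\ t\,S_{|r|_m}(r)\right)}$. $\phi$ is Euler's function. *)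

(* Defs.v *)
From mathcomp Require Import all_boot all_order all_algebra.
Set Implicit Arguments. Unset Strict Implicit. Unset Printing Implicit Defensive.
Import Order.TTheory GRing.Theory Num.Theory.

Definition squarefree (n : nat) : Prop :=
  forall p : nat, prime p -> ~~ (p ^ 2 %| n).

(* V_n = {u_n^i v_n : 0 <= i < n} is indexed by i : 'I_n (i <-> u_n^i v_n).
   The automorphism a_{n,r,t} maps u_n^j v_n to u_n^{rj+t} v_n, i.e. the
   index j to (r*j + t) mod n.  (insubd j is only a default for the
   impossible case n = 0.) *)
Definition aV (n : nat) (r t : int) (j : 'I_n) : 'I_n :=
  insubd j (absz (((r * (j : nat)%:Z + t)%R) %% (n%:Z))%Z).

Definition cV (n : nat) (r t : int) : nat := fcard (@aV n r t) predT.

(* |r|_m : multiplicative order of r modulo m (m >= 1, gcd(r,m)=1), i.e. the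
   least k > 0 with m | r^k - 1.  Such k exists with k <= m, so it is found
   by a search over 0..m; in particular |r|_1 = 1. *)
Definition mord (m : nat) (r : int) : nat :=
  find (fun k => (0 < k)%N && ((m%:Z %| (r ^+ k - 1)%R)%Z)) (iota 0 m.+1).

Definition Ssum (k : nat) (x : int) : int := (\sum_(i < k) x ^+ i)%R.

Definition kappa (m : nat) (r t : int) : nat :=
  (m * mord m r) %/ gcdn m `|(t * Ssum (mord m r) r)%R|.

(* Main.v *)
Require Import Defs.
From mathcomp Require Import all_boot all_order all_algebra.
From mathcomp Require Import zify ring.
From mathcomp Require Import cyclic.
Import Order.TTheory GRing.Theory Num.Theory.
Set Implicit Arguments. Unset Strict Implicit. Unset Printing Implicit Defensive.

Section PartA.

Lemma sum_blocks (c M : nat) (F : nat -> nat) :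
  \sum_(0 <= k < M * c) F k = \sum_(0 <= j < M) \sum_(0 <= i < c) F (j * c + i).
Proof.
elim: M => [|M IH]; first by rewrite mul0n !big_geq.
rewrite big_nat_recr //= -IH (@big_cat_nat _ _ _ (M * c)) //=; last by rewrite leq_mul2r leqnSn orbT.
congr (_ + _).
rewrite mulSn addnC -{1}[M * c]add0n big_addn.
have -> : M * c + c - M * c = c by rewrite addKn.
by apply: eq_bigr => i _; rewrite addnC.
Qed.

End PartA.

Section PartB.

Lemma sum_mult (c M : nat) (F : nat -> nat) : 0 < c ->
  \sum_(0 <= k < M * c) (if c %| k then F k else 0) = \sum_(0 <= j < M) F (j * c).
Proof.
move=> c0; rewrite sum_blocks; apply: eq_bigr => j _.
rewrite big_ltn // addn0 dvdn_mull // big1_seq ?addn0 // => i /andP[_].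
rewrite mem_iota => /andP[i1 i2].
rewrite dvdn_addr ?dvdn_mull //.
case: ifP => // /dvdn_leq H; exfalso; move: i1 i2 H; clear; lia.
Qed.

Lemma sum_res (c M r : nat) : r < c ->
  \sum_(0 <= k < M * c) (k %% c == r) = M.
Proof.
move=> rc; rewrite sum_blocks -[RHS]muln1 -[M in RHS](subn0 M) -sum_nat_const_nat.
apply: eq_bigr => j _.
have c0 : 0 < c by apply: leq_ltn_trans rc.
under eq_bigr => i _ do rewrite modnMDl.
rewrite (big_cat_nat _ (n := r)) //= ?(ltnW rc) // big1_seq; last first.
  move=> i /andP[_]; rewrite mem_iota => H; rewrite modn_small; last lia; case: eqP => //; lia.
rewrite big_ltn // (@modn_small r) // eqxx add0n big1_seq // => i /andP[_].
rewrite mem_iota => H; rewrite modn_small; last lia; case: eqP => //; lia.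
Qed.

End PartB.

Section PartC.

Section Burnside.
Variables (T : finType) (f : T -> T) (N : nat).
Hypotheses (N0 : 0 < N) (fN : forall x, iter N f x = x).

Lemma injf : injective f.
Proof.
move=> x y fxy; rewrite -(fN x) -(fN y).
by case: N N0 => // N' _; rewrite !iterSr fxy.
Qed.

Lemma iter_mul_order x q : iter (q * order f x) f x = x.
Proof.
elim: q => [|q IH] //; rewrite mulSn iterD IH.
exact: (iter_order injf).
Qed.

Lemma iter_eq_order x k : (iter k f x == x) = (order f x %| k).
Proof.
rewrite {1}(divn_eq k (order f x)) addnC iterD iter_mul_order.
rewrite /dvdn; apply/eqP/eqP => [H|->] //.
have := findex_iter (ltn_pmod k (order_gt0 f x)); rewrite H findex0.
by move=> <-.
Qed.

Lemma order_dvdN x : order f x %| N.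
Proof. by rewrite -iter_eq_order fN. Qed.

Lemma sum_fix_x x : \sum_(0 <= k < N) (iter k f x == x) = N %/ order f x.
Proof.
have o0 := order_gt0 f x.
rewrite -{1}(divnK (order_dvdN x)).
transitivity (\sum_(0 <= k < N %/ order f x * order f x)
   (if order f x %| k then 1 else 0)).
  by apply: eq_bigr => k _; rewrite iter_eq_order; case: ifP.
by rewrite sum_mult // sum_nat_const_nat subn0 muln1.
Qed.

Let symf : connect_sym (frel f) := fconnect_sym injf.

Lemma order_root x : order f (froot f x) = order f x.
Proof.
rewrite /order; apply: eq_card => y.
by rewrite !inE; apply: (same_connect symf); rewrite symf connect_root.
Qed.

Theorem burnside :
  \sum_(0 <= k < N) \sum_x (iter k f x == x) = N * fcard f predT.
Proof.
rewrite exchange_big /=.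
under eq_bigr => x _ do rewrite sum_fix_x.
rewrite (partition_big (froot f) (froots f)) /=; last first.
  by move=> x _; apply: (roots_root symf).
transitivity (\sum_(y | froots f y) N).
  apply: eq_bigr => y /eqP ry.
  transitivity (\sum_(x | froot f x == y) N %/ order f y).
    apply: eq_bigr => x /eqP <-; by rewrite order_root.
  rewrite sum_nat_const.
  have -> : #|[pred x | froot f x == y]| = order f y.
    rewrite /order; apply: eq_card => x; rewrite !inE -{1}ry.
    by rewrite (root_connect symf) symf.
  by rewrite mulnC divnK // order_dvdN.
rewrite sum_nat_const mulnC; congr (_ * _).
by apply: eq_card => x; rewrite !inE andbT.
Qed.
End Burnside.

End PartC.

Section PartD.
Local Open Scope ring_scope.

Lemma SsumS k x : Ssum k.+1 x = 1 + x * Ssum k x.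
Proof.
rewrite /Ssum big_ord_recl expr0 mulr_sumr; congr (_ + _).
by apply: eq_bigr => i _; rewrite exprS.
Qed.

Lemma SsumSr k x : Ssum k.+1 x = Ssum k x + x ^+ k.
Proof. by rewrite /Ssum big_ord_recr. Qed.

Lemma Ssum0 x : Ssum 0 x = 0.
Proof. by rewrite /Ssum big_ord0. Qed.

Lemma Ssum_geom k x : (x - 1) * Ssum k x = x ^+ k - 1.
Proof.
elim: k => [|k IH]; first by rewrite Ssum0 mulr0 expr0 subrr.
rewrite SsumSr mulrDr IH exprS; ring.
Qed.

Lemma SsumD a b x : Ssum (a + b) x = Ssum a x + x ^+ a * Ssum b x.
Proof.
elim: b => [|b IH]; first by rewrite addn0 Ssum0 mulr0 addr0.
rewrite addnS !SsumSr IH exprD; ring.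
Qed.

Lemma Ssum_mul a q x : Ssum (a * q) x = Ssum a x * Ssum q (x ^+ a).
Proof.
elim: q => [|q IH]; first by rewrite muln0 !Ssum0 mulr0.
rewrite mulnS SsumD IH SsumS; ring.
Qed.

Lemma Ssum_mod (y : int) q : (y - 1 %| Ssum q y - q%:Z)%Z.
Proof.
elim: q => [|q IH]; first by rewrite Ssum0 subr0.
have -> : Ssum q.+1 y - q.+1%:Z = (Ssum q y - q%:Z) + (y ^+ q - 1).
  by rewrite SsumSr -addn1 PoszD; ring.
by rewrite rpredD // -Ssum_geom dvdz_mulr.
Qed.

Lemma dvdz_pow1 (y : int) a q : (y ^+ a - 1 %| y ^+ (a * q) - 1)%Z.
Proof. by rewrite exprM -Ssum_geom dvdz_mulr. Qed.

Lemma euler_int (d : nat) (r : int) : (0 < d)%N -> coprime `|r| d ->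
  (d%:Z %| r ^+ totient d - 1)%Z.
Proof.
move=> d0 cop.
have ge0 : 0 <= (r %% d%:Z)%Z by rewrite modz_ge0 // -lt0n.
set a := `|(r %% d%:Z)%Z|%N.
have aE : a%:Z = (r %% d%:Z)%Z by rewrite /a gez0_abs.
have copa : coprime a d.
  by have := gcdz_modl r d%:Z; rewrite /gcdz /coprime => -[H]; rewrite /a H.
rewrite -eqz_mod_dvd -modzXm -aE -natz -natrX natz modz_nat.
by rewrite (Euler_exp_totient copa) -modz_nat.
Qed.

Lemma totient_le n : (totient n <= n)%N.
Proof.
rewrite totient_count_coprime.
apply: (@leq_trans (\sum_(0 <= i < n) 1)%N).
  by apply: leq_sum => i _; apply: leq_b1.
by rewrite sum_nat_const_nat subn0 muln1.
Qed.

Section Mord.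
Variables (d : nat) (r : int).
Hypotheses (d0 : (0 < d)%N) (cop : coprime `|r| d).

Let P := fun k : nat => (0 < k)%N && (d%:Z %| r ^+ k - 1)%Z.

Lemma mord_hasP : has P (iota 0 d.+1).
Proof.
apply/hasP; exists (totient d); first by rewrite mem_iota add0n ltnS totient_le.
by rewrite /P totient_gt0 d0 euler_int.
Qed.

Lemma mord_lt : (mord d r < d.+1)%N.
Proof. by have := mord_hasP; rewrite has_find size_iota. Qed.

Lemma mord_P : P (mord d r).
Proof.
by have := nth_find 0 mord_hasP; rewrite nth_iota // mord_lt.
Qed.

Lemma mord_gt0 : (0 < mord d r)%N.
Proof. by case/andP: mord_P. Qed.

Lemma mord_pow : (d%:Z %| r ^+ mord d r - 1)%Z.
Proof. by case/andP: mord_P. Qed.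

Lemma mord_min i : (0 < i < mord d r)%N -> ~~ (d%:Z %| r ^+ i - 1)%Z.
Proof.
case/andP=> i0 im; have := before_find 0 im.
rewrite nth_iota ?add0n; last by apply: ltn_trans mord_lt.
by rewrite i0 /= => ->.
Qed.

Lemma mord_dvd k : (d%:Z %| r ^+ k - 1)%Z = (mord d r %| k)%N.
Proof.
set o := mord d r.
have o0 : (0 < o)%N := mord_gt0.
rewrite {1}(divn_eq k o) exprD.
have -> : r ^+ (k %/ o * o) * r ^+ (k %% o) - 1 =
   (r ^+ (o * (k %/ o)) - 1) * r ^+ (k %% o) + (r ^+ (k %% o) - 1).
  by rewrite mulnC; ring.
rewrite rpredDl; last first.
  by apply: dvdz_mulr; apply: dvdz_trans mord_pow (dvdz_pow1 _ _ _).
rewrite /dvdn; case: (posnP (k %% o)) => [->|kp]; first by rewrite expr0 subrr dvdz0.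
apply/negbTE; rewrite mord_min // kp ltn_pmod //.
Qed.
End Mord.

End PartD.

Section PartE.

Lemma coprime_div_gcd' d c : (0 < d)%N -> coprime (d %/ gcdn d c) (c %/ gcdn d c).
Proof.
move=> d0; have g0 : (0 < gcdn d c)%N by rewrite gcdn_gt0 d0.
rewrite /coprime -(eqn_pmul2r g0) muln_gcdl !divnK ?dvdn_gcdl ?dvdn_gcdr //.
by rewrite mul1n.
Qed.

Lemma dvdn_mul_gcd d c q : (0 < d)%N -> (d %| c * q)%N = (d %/ gcdn d c %| q)%N.
Proof.
move=> d0; have g0 : (0 < gcdn d c)%N by rewrite gcdn_gt0 d0.
have cop := coprime_div_gcd' c d0.
have Hd := esym (divnK (dvdn_gcdl d c)); have Hc := esym (divnK (dvdn_gcdr d c)).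
set g := gcdn d c in g0 cop Hd Hc *.
rewrite {1}Hd {1}Hc mulnAC dvdn_pmul2r //.
by rewrite Gauss_dvdr.
Qed.

Local Open Scope ring_scope.

Lemma kappaE d r t : kappa d r t = (mord d r * (d %/ gcdn d `|(t * Ssum (mord d r) r)%R|))%N.
Proof. by rewrite /kappa mulnC muln_divA ?dvdn_gcdl. Qed.

Lemma kappa_gt0 d r t : (0 < d)%N -> coprime `|r| d -> (0 < kappa d r t)%N.
Proof.
move=> d0 cop; rewrite kappaE muln_gt0 mord_gt0 //= divn_gt0 ?gcdn_gt0 ?d0 //.
by rewrite dvdn_leq ?dvdn_gcdl.
Qed.

Lemma kappa_dvd d r t k : (0 < d)%N -> coprime `|r| d ->
  ((d%:Z %| r ^+ k - 1)%Z && (d%:Z %| t * Ssum k r)%Z) = (kappa d r t %| k)%N.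
Proof.
move=> d0 cop; rewrite mord_dvd // kappaE.
set o := mord d r; set c := t * Ssum o r.
have o0 : (0 < o)%N by apply: mord_gt0.
case: (boolP (o %| k)%N) => /= ok; last first.
  by apply/esym/negbTE; apply: contra ok; apply: dvdn_trans; apply: dvdn_mulr.
rewrite -(divnK ok); set q := (k %/ o)%N.
rewrite [(q * o)%N]mulnC dvdn_pmul2l // Ssum_mul mulrA -/c -dvdn_mul_gcd //.
have -> : c * Ssum q (r ^+ o) = c * q%:Z + c * (Ssum q (r ^+ o) - q%:Z) by ring.
rewrite rpredDr; last first.
  apply: dvdz_mull; apply: dvdz_trans (Ssum_mod _ _); exact: mord_pow.
by rewrite dvdzE abszM.
Qed.

End PartE.

Section PartF.
Local Open Scope ring_scope.

Section Iter.
Variables (n : nat) (r t : int).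
Hypothesis n0 : (0 < n)%N.

Lemma modz_n_ge0 z : 0 <= (z %% n%:Z)%Z.
Proof. by rewrite modz_ge0 // -lt0n. Qed.

Lemma aV_val (j : 'I_n) : ((aV r t j : nat)%:Z) = ((r * j%:Z + t) %% n%:Z)%Z.
Proof.
rewrite /aV val_insubd.
have lt : (`|((r * j%:Z + t) %% n%:Z)%Z| < n)%N.
  by rewrite -ltz_nat gez0_abs ?modz_n_ge0 // ltz_pmod.
by rewrite lt gez0_abs ?modz_n_ge0.
Qed.

Lemma iter_aV k (j : 'I_n) :
  ((iter k (@aV n r t) j : nat)%:Z) = ((r ^+ k * j%:Z + t * Ssum k r) %% n%:Z)%Z.
Proof.
elim: k => [|k IH]; first by rewrite /= expr0 mul1r Ssum0 mulr0 addr0 modz_small // ltz_nat ltn_ord andbT.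
rewrite iterS aV_val IH -modzDml modzMmr modzDml SsumS; congr (_ %% _)%Z.
rewrite exprS; ring.
Qed.

Lemma fix_iff k (j : 'I_n) : (iter k (@aV n r t) j == j) =
   (n%:Z %| (r ^+ k - 1) * j%:Z + t * Ssum k r)%Z.
Proof.
rewrite -(inj_eq val_inj) /= -eqz_nat iter_aV.
rewrite [X in _ == X](_ : _ = (j%:Z %% n%:Z)%Z); last by rewrite modz_small // ltz_nat ltn_ord andbT.
rewrite eqz_mod_dvd.
have -> : r ^+ k * j%:Z + t * Ssum k r - j%:Z = (r ^+ k - 1) * j%:Z + t * Ssum k r by ring.
by [].
Qed.
End Iter.

End PartF.

Section PartG.
Local Open Scope ring_scope.

Lemma count_lin (n : nat) (a b : int) : (0 < n)%N ->
  (\sum_(0 <= x < n) ((n%:Z %| (a * x%:Z + b)%R)%Z : nat))%N =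
  (if (gcdn `|a| n %| `|b|)%N then gcdn `|a| n else 0)%N.
Proof.
move=> n0; set g := gcdn `|a| n.
have g0 : (0 < g)%N by rewrite gcdn_gt0 n0 orbT.
have ga : (g%:Z %| a)%Z by rewrite dvdzE dvdn_gcdl.
have gn : (g %| n)%N by rewrite dvdn_gcdr.
case: (boolP (g %| `|b|)%N) => gb; last first.
  rewrite big1_seq // => x _; apply/eqP; rewrite eqb0; apply: contra gb => H.
  have : (g%:Z %| a * x%:Z + b)%Z by apply: dvdz_trans H; rewrite dvdzE.
  by rewrite rpredDl // dvdz_mulr.
have gb' : (g%:Z %| b)%Z by rewrite dvdzE.
set a' := (a %/ g%:Z)%Z; set b' := (b %/ g%:Z)%Z; set n' := (n %/ g)%N.
have Ha : a = a' * g%:Z by rewrite divzK.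
have Hb : b = b' * g%:Z by rewrite divzK.
have Hn : n = (n' * g)%N by rewrite divnK.
have n'0 : (0 < n')%N by rewrite divn_gt0 // dvdn_leq.
have cop : gcdn `|a'| n' = 1%N.
  have Aa : `|a|%N = (`|a'| * g)%N by rewrite {1}Ha abszM.
  by apply/eqP; rewrite -(eqn_pmul2r g0) muln_gcdl mul1n -Hn -Aa.
have [u [v Huv]] := Bezoutz a' n'%:Z.
rewrite /gcdz /= cop in Huv.
have {}Huv : u * a' + v * n'%:Z = 1 by rewrite Huv.
set c := - (u * b').
have key x : (n%:Z %| a * x%:Z + b)%Z = ((x %% n')%N == `|(c %% n'%:Z)%Z|%N).
  have -> : n%:Z = n'%:Z * g%:Z by rewrite {1}Hn PoszM.
  have -> : a * x%:Z + b = (a' * x%:Z + b') * g%:Z by rewrite {1}Ha {1}Hb; ring.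
  rewrite dvdz_mul2r ?pnatr_eq0 -?lt0n //.
  have -> : (n'%:Z %| a' * x%:Z + b')%Z = (n'%:Z %| x%:Z - c)%Z.
    apply/idP/idP => H.
      have -> : x%:Z - c = u * (a' * x%:Z + b') + x%:Z * v * n'%:Z.
        by rewrite /c; rewrite -[x%:Z in LHS]mulr1 -Huv; ring.
      by rewrite rpredD // dvdz_mull.
    have -> : a' * x%:Z + b' = a' * (x%:Z - c) + b' * v * n'%:Z.
      by rewrite /c; rewrite -[b' in LHS]mulr1 -Huv; ring.
    by rewrite rpredD // dvdz_mull.
  rewrite -eqz_mod_dvd modz_nat -eqz_nat gez0_abs //.
  by rewrite modz_ge0 // -lt0n.
under eq_bigr => x _ do rewrite key.
rewrite Hn mulnC sum_res //.
by rewrite -ltz_nat gez0_abs ?ltz_pmod ?modz_ge0 // -?lt0n.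
Qed.

End PartG.

Section PartH.

Lemma sqf_coprime n d : (0 < n)%N -> squarefree n -> (d %| n)%N -> coprime d (n %/ d).
Proof.
move=> n0 sqf dn.
have d0 : (0 < d)%N by apply: dvdn_gt0 dn.
apply/negPn/negP => H.
have h1 : (1 < gcdn d (n %/ d))%N.
  by move: H; rewrite /coprime; have := gcdn_gt0 d (n %/ d); rewrite d0 /=; lia.
have pp := pdiv_prime h1; have pd := pdiv_dvd (gcdn d (n %/ d)).
set p := pdiv _ in pp pd *.
have pdd : (p %| d)%N by apply: dvdn_trans pd (dvdn_gcdl _ _).
have pnd : (p %| n %/ d)%N by apply: dvdn_trans pd (dvdn_gcdr _ _).
apply: (negP (sqf _ pp)); rewrite expnS expn1 -(divnK dn) [(_ %/ d * d)%N]mulnC.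
by apply: dvdn_mul.
Qed.

Lemma count_gcd M l : (0 < M)%N -> (l %| M)%N ->
  (\sum_(0 <= j < M) (gcdn j M == l))%N = totient (M %/ l).
Proof.
move=> M0 lM; have l0 : (0 < l)%N by apply: dvdn_gt0 lM.
rewrite -{1 2}(divnK lM); set M' := (M %/ l)%N.
transitivity (\sum_(0 <= j < M' * l) (if l %| j then ((gcdn j (M' * l) == l) : nat) else 0%N))%N.
  apply: eq_bigr => j _; case: ifP => // lj; case: eqP => // H.
  by have := dvdn_gcdl j (M' * l); rewrite H lj.
rewrite sum_mult // totient_count_coprime; apply: eq_bigr => i _.
by rewrite -muln_gcdl -{2}[l]mul1n eqn_pmul2r // coprime_sym.
Qed.

End PartH.

Section PartI.

Local Open Scope ring_scope.
Section Main.
Variables (n : nat) (r t : int).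
Hypotheses (n1 : (1 < n)%N) (sqf : squarefree n) (cop : coprime `|r| n).

Let n0 : (0 < n)%N. Proof. exact: ltnW. Qed.

Definition GG (e : nat) := gcdn `|(r ^+ e - 1)%R| n.

Lemma dvdz_nat (d : nat) (z : int) : (d%:Z %| z)%Z = (d %| `|z|)%N.
Proof. by []. Qed.

Lemma cop_div d : (d %| n)%N -> coprime `|r| d.
Proof. by move=> dn; apply: coprime_dvdr dn cop. Qed.

Lemma div_pos d : (d %| n)%N -> (0 < d)%N.
Proof. by move=> dn; apply: dvdn_gt0 dn. Qed.

Lemma GG_dvd e : (GG e %| n)%N.
Proof. exact: dvdn_gcdr. Qed.

Lemma GG_gt0 e : (0 < GG e)%N.
Proof. by rewrite gcdn_gt0 n0 orbT. Qed.

Lemma mord_n_gt0 : (0 < mord n r)%N.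
Proof. exact: mord_gt0. Qed.

Lemma mord_div_dvd d : (d %| n)%N -> (mord d r %| mord n r)%N.
Proof.
move=> dn; rewrite -mord_dvd ?div_pos ?cop_div //.
by apply: dvdz_trans (mord_pow n0 cop); rewrite dvdz_nat.
Qed.

Lemma GG_gcd e : GG e = GG (gcdn e (mord n r)).
Proof.
have key d : (d %| n)%N -> (d %| `|(r ^+ e - 1)%R|)%N = (d %| `|(r ^+ gcdn e (mord n r) - 1)%R|)%N.
  move=> dn; rewrite -!dvdz_nat !mord_dvd ?div_pos ?cop_div //.
  by rewrite dvdn_gcd mord_div_dvd // andbT.
apply/eqP; rewrite eqn_dvd; apply/andP; split; rewrite dvdn_gcd dvdn_gcdr andbT.
  by rewrite -key ?dvdn_gcdl // GG_dvd.
by rewrite key ?dvdn_gcdl // GG_dvd.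
Qed.

Definition KK := kappa n r t.

Lemma KK_gt0 : (0 < KK)%N.
Proof. exact: kappa_gt0. Qed.

Lemma KK_prop : (n%:Z %| r ^+ KK - 1)%Z && (n%:Z %| t * Ssum KK r)%Z.
Proof. by rewrite kappa_dvd. Qed.

Lemma iter_KK (x : 'I_n) : iter KK (@aV n r t) x = x.
Proof.
apply/eqP; rewrite fix_iff //; case/andP: KK_prop => H1 H2.
by rewrite rpredD // dvdz_mulr.
Qed.

Lemma m_dvd_K : (mord n r %| KK)%N.
Proof. by rewrite -mord_dvd //; case/andP: KK_prop. Qed.

Lemma kd_dvd_K d : (d %| n)%N -> (kappa d r t %| KK)%N.
Proof.
move=> dn; rewrite -kappa_dvd ?div_pos ?cop_div //; case/andP: KK_prop => H1 H2.
by rewrite (dvdz_trans _ H1) ?(dvdz_trans _ H2) // dvdz_nat.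
Qed.

Lemma fix_count k :
  (\sum_(x : 'I_n) (iter k (@aV n r t) x == x))%N =
  (if kappa (GG k) r t %| k then GG k else 0)%N.
Proof.
under eq_bigr => x _ do rewrite fix_iff //.
rewrite -(big_mkord xpredT (fun x => ((n%:Z %| ((r ^+ k - 1) * x%:Z + t * Ssum k r)%R)%Z : nat))).
rewrite count_lin // -/(GG k).
rewrite -kappa_dvd ?GG_gt0 ?cop_div ?GG_dvd //.
by rewrite dvdz_nat dvdn_gcdl.
Qed.


Lemma absz_geom k : `|(r ^+ k - 1)%R|%N = (`|(r - 1)%R| * `|Ssum k r|)%N.
Proof. by rewrite -Ssum_geom abszM. Qed.

Lemma Klcm d : (d %| n)%N -> forall e, (kappa d r t %| e)%N -> GG e = d ->
  KK = lcmn (kappa d r t) (mord n r).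
Proof.
move=> dn e ke Ge.
have d0 := div_pos dn; have cd := cop_div dn.
apply/eqP; rewrite eqn_dvd; apply/andP; split; last by rewrite dvdn_lcm kd_dvd_K // m_dvd_K.
rewrite -kappa_dvd //.
set L := lcmn _ _.
have H1 : (n%:Z %| r ^+ L - 1)%Z by rewrite mord_dvd // dvdn_lcmr.
rewrite H1 /=.
set e' := (n %/ d)%N.
have cde := sqf_coprime n0 sqf dn.
have Hn : n = (d * e')%N by rewrite mulnC divnK.
have e'n : (e' %| n)%N by rewrite Hn dvdn_mull.
rewrite dvdz_nat Hn Gauss_dvd //; apply/andP; split.
  have := kappa_dvd t L d0 cd; rewrite dvdn_lcml => /andP[_].
  by rewrite dvdz_nat.
rewrite abszM dvdn_mull //.
have ce : coprime e' `|(r - 1)%R|.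
  rewrite /coprime -dvdn1 -(eqP cde) dvdn_gcd dvdn_gcdl andbT.
  rewrite -Ge /GG dvdn_gcd absz_geom dvdn_mulr ?dvdn_gcdr //=.
  by apply: dvdn_trans e'n; apply: dvdn_gcdl.
rewrite -(Gauss_dvdr _ ce) -absz_geom.
by apply: dvdn_trans e'n _; rewrite -dvdz_nat.
Qed.

Lemma lcm_eq k m : (0 < m)%N -> lcmn k m = (k * (m %/ gcdn k m))%N.
Proof. by move=> m0; rewrite /lcmn muln_divA // dvdn_gcdr. Qed.


Lemma gcd_mul_k k m j : (0 < m)%N ->
  gcdn (j * k) m = (gcdn j (m %/ gcdn k m) * gcdn k m)%N.
Proof.
move=> m0; have cp : coprime (m %/ gcdn k m) (k %/ gcdn k m).
  by rewrite [gcdn k m]gcdnC; exact: coprime_div_gcd'.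
have Hk := esym (divnK (dvdn_gcdl k m)); have Hm := esym (divnK (dvdn_gcdr k m)).
set g := gcdn k m in Hk Hm cp *.
set k' := (k %/ g)%N in Hk cp; set M := (m %/ g)%N in Hm cp *.
rewrite {1}Hk {1}Hm mulnA -muln_gcdl.
congr (_ * _)%N; rewrite [LHS]gcdnC Gauss_gcdl //; exact: gcdnC.
Qed.

Lemma per_d d : (d %| n)%N ->
  (\sum_(0 <= k < KK) ((GG k == d) && (kappa d r t %| k)))%N =
  (\sum_(l <- divisors (mord n r %/ gcdn (kappa d r t) (mord n r)) | GG (l * kappa d r t) == d)
      totient (mord n r %/ (l * gcdn (kappa d r t) (mord n r))))%N.
Proof.
move=> dn; have d0 := div_pos dn; have cd := cop_div dn.
set k := kappa d r t; set m := mord n r; set g := gcdn k m; set M := (m %/ g)%N.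
have m0 : (0 < m)%N := mord_n_gt0.
have k0 : (0 < k)%N by apply: kappa_gt0.
have g0 : (0 < g)%N by rewrite gcdn_gt0 m0 orbT.
have M0 : (0 < M)%N by rewrite divn_gt0 // dvdn_leq // dvdn_gcdr.
have main : KK = (k * M)%N -> (\sum_(0 <= k0 < KK) ((GG k0 == d) && (k %| k0)))%N =
  (\sum_(l <- divisors M | GG (l * k) == d) totient (m %/ (l * g)))%N.
  move=> HK; rewrite HK mulnC.
  transitivity (\sum_(0 <= i < M * k) (if k %| i then ((GG i == d) : nat) else 0))%N.
    by apply: eq_bigr => i _; rewrite andbC; case: ifP.
  rewrite sum_mult //.
  transitivity (\sum_(0 <= j < M) \sum_(l <- divisors M)
      (if gcdn j M == l then ((GG (l * k) == d) : nat) else 0))%N.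
    apply: eq_bigr => j _.
    rewrite (bigD1_seq (gcdn j M)) ?divisors_uniq //=; last by rewrite -dvdn_divisors // dvdn_gcdr.
    rewrite eqxx big1 ?addn0; last by move=> l; rewrite eq_sym => /negbTE ->.
    rewrite GG_gcd [in RHS]GG_gcd !gcd_mul_k // -/g -/M.
    by rewrite (gcdn_idPl (dvdn_gcdr j M)).
  rewrite exchange_big /= [in RHS]big_mkcond /=.
  apply: eq_big_seq => l; rewrite -dvdn_divisors // => lM.
  case: (GG (l * k) == d) => /=; last by rewrite big1 // => j _; case: ifP.
  transitivity (\sum_(0 <= j < M) (gcdn j M == l))%N.
    by apply: eq_bigr => j _; case: eqP.
  by rewrite count_gcd // mulnC divnMA.
case: (eqVneq KK (k * M)%N) => [HK | HK]; first exact: main HK.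
rewrite !big1_seq //.
  move=> l /andP[/eqP Gl _]; exfalso; move/eqP: HK; apply.
  by apply/eqP; rewrite (Klcm dn (dvdn_mull l (dvdnn k)) Gl) lcm_eq.
move=> i _; apply/eqP; rewrite eqb0; apply/negP => /andP[/eqP Gi ki].
move/eqP: HK; apply.
by apply/eqP; rewrite (Klcm dn ki Gi) lcm_eq.
Qed.

End Main.

End PartI.

Section PartJ.

Lemma nat_identity (n : nat) (r t : int) :
  (1 < n)%N -> squarefree n -> coprime `|r| n ->
  (kappa n r t * cV n r t)%N =
  (\sum_(d <- divisors n) d *
     \sum_(l <- divisors (mord n r %/ gcdn (kappa d r t) (mord n r))%N
           | GG n r (l * kappa d r t) == d)
       totient (mord n r %/ (l * gcdn (kappa d r t) (mord n r))))%N.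
Proof.
move=> n1 sqf cop; have n0 : (0 < n)%N by apply: ltnW.
rewrite /cV -(burnside (KK_gt0 t n1 cop)); last by move=> x; exact: (iter_KK t n1 cop).
under eq_bigr => k _ do rewrite fix_count //.
transitivity (\sum_(0 <= k < KK n r t) \sum_(d <- divisors n)
    (if (GG n r k == d) && (kappa d r t %| k) then d else 0))%N.
  apply: eq_bigr => k _.
  rewrite (bigD1_seq (GG n r k)) ?divisors_uniq //=; last by rewrite -dvdn_divisors // GG_dvd.
  rewrite eqxx big1 ?addn0 //; last by move=> d; rewrite eq_sym => /negbTE ->.
rewrite exchange_big /=; apply: eq_big_seq => d; rewrite -dvdn_divisors // => dn.
rewrite -per_d // big_distrr /=; apply: eq_bigr => k _.
by case: ifP => _; rewrite ?muln1 ?muln0.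
Qed.

End PartJ.

Unset Implicit Arguments.

Theorem lemma4p3 (n : nat) (r t : int) :
  (1 < n)%N -> squarefree n -> coprime `|r| n ->
  ((cV n r t)%:R : rat) =
  (\sum_(d <- divisors n)
     \sum_(l <- divisors (mord n r %/ gcdn (kappa d r t) (mord n r))%N
           | gcdn `|(r ^+ (l * kappa d r t)%N - 1)%R| n == d)
       ((d%:R / (kappa n r t)%:R) *
        (totient (mord n r %/ (l * gcdn (kappa d r t) (mord n r))))%N%:R))%R.
Proof.
move=> n1 sqf cop.
have K0 : (((kappa n r t)%:R : rat) != 0)%R by rewrite pnatr_eq0 -lt0n (KK_gt0 t n1 cop).
transitivity ((((kappa n r t * cV n r t)%N%:R : rat) / (kappa n r t)%:R)%R).
  by rewrite natrM mulrAC mulfV // mul1r.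
rewrite nat_identity // natr_sum mulr_suml; apply: eq_bigr => d _.
rewrite natrM natr_sum mulr_sumr mulr_suml; apply: eq_bigr => l _.
by rewrite mulrAC.
Qed.
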